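(* Let $n\ge1$, $\boldsymbol z\in\{0,1\}^n$, and $\boldsymbol y,\boldsymbol y'\in\overline{\mathbb R}^n$ with $y_i\le y_i'$ if $z_i=1$ and $y_i\ge y_i'$ if $z_i=0$. Let $a,b>0$, $\gamma=\min(\{y_i:y_i\in\mathbb R\}\cup\{y_i':y_i'\in\mathbb R\})-a$ and $\zeta=\max(\{y_i:y_i\in\mathbb R\}\cup\{y_i':y_i'\in\mathbb R\})+b$, and define $\tilde{\boldsymbol y},\tilde{\boldsymbol y}'\in\mathbb R^n$ by replacing each coordinate equal to $-\infty$ by $\gamma$ and each coordinate equal to $+\infty$ by $\zeta$ (real coordinates unchanged). Then, for the rank-sum statistic $t_{\mathrm R,\phi}$: (a) $\tilde y_i\le\tilde y_i'$ if $z_i=1$ and $\tilde y_i\ge\tilde y_i'$ if $z_i=0$; (b) $t_{\mathrm R,\phi}(\boldsymbol z,\boldsymbol y)=t_{\mathrm R,\phi}(\boldsymbol z,\tilde{\boldsymbol y})$ and $t_{\mathrm R,\phi}(\boldsymbol z,\boldsymbol y')=t_{\mathrm R,\phi}(\boldsymbol z,\tilde{\boldsymbol y}')$; (c) $t_{\mathrm R,\phi}(\boldsymbol z,\boldsymbol y)\le t_{\mathrm R,\phi}(\boldsymbol z,\boldsymbol y')$.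
   Context: $\overline{\mathbb R}=\mathbb R\cup\{\pm\infty\}$. For $1\le i,j\le n$ and $y,y'\in\overline{\mathbb R}$, $\psi_{i,j}(y,y')=\mathbf 1\{y>y'\}+\mathbf 1\{y=y'\}\mathbf 1\{i\ge j\}$; $\mathrm{rank}_i(\boldsymbol y)=\sum_{j=1}^n\psi_{i,j}(y_i,y_j)$. $\phi$ is a fixed nondecreasing real function on the nonnegative integers. Rank-sum statistic: $t_{\mathrm R,\phi}(\boldsymbol z,\boldsymbol y)=\sum_{i=1}^nz_i\phi(\mathrm{rank}_i(\boldsymbol y))$. *)

(* Defs.v *)
From HB Require Import structures.
From mathcomp Require Import all_boot all_order all_algebra.
From mathcomp Require Import reals constructive_ereal.
Set Implicit Arguments. Unset Strict Implicit. Unset Printing Implicit Defensive.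
Import Order.TTheory GRing.Theory Num.Theory.
Local Open Scope ring_scope.
Local Open Scope ereal_scope.

Section Defs.
Variable R : realType.

Definition psi (n : nat) (i j : 'I_n) (y y' : \bar R) : nat :=
  addn (nat_of_bool (y' < y)) (nat_of_bool ((y == y') && (j <= i)%N)).

Definition rank (n : nat) (y : 'I_n -> \bar R) (i : 'I_n) : nat :=
  (\sum_(j < n) psi i j (y i) (y j))%N.

Definition tR (phi : nat -> R) (n : nat) (z : 'I_n -> bool) (y : 'I_n -> \bar R) : R :=
  (\sum_(i < n) (z i)%:R * phi (rank y i))%R.

Definition real_coords (n : nat) (y y' : 'I_n -> \bar R) : seq R :=
  [seq fine (y i) | i <- enum 'I_n & y i \is a fin_num] ++
  [seq fine (y' i) | i <- enum 'I_n & y' i \is a fin_num].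

(* min / max of a list of reals; convention 0 for the empty list *)
Definition seq_min (s : seq R) : R :=
  if s is x :: s' then (\big[Num.min/x]_(v <- s') v)%R else 0%R.
Definition seq_max (s : seq R) : R :=
  if s is x :: s' then (\big[Num.max/x]_(v <- s') v)%R else 0%R.

Definition gamma (n : nat) (y y' : 'I_n -> \bar R) (a : R) : R :=
  (seq_min (real_coords y y') - a)%R.
Definition zeta (n : nat) (y y' : 'I_n -> \bar R) (b : R) : R :=
  (seq_max (real_coords y y') + b)%R.

Definition fill (g h : R) (x : \bar R) : R :=
  match x with EFin r => r | +oo => h | -oo => g end.

End Defs.

(* Main.v *)
Require Import Defs.
From HB Require Import structures.
From mathcomp Require Import all_boot all_order all_algebra.
From mathcomp Require Import reals constructive_ereal.
From mathcomp Require Import zify lra.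
Import Order.TTheory GRing.Theory Num.Theory.
Local Open Scope ring_scope.
Local Open Scope ereal_scope.

Set Implicit Arguments. Unset Strict Implicit.
Section Aux.
Variable R : realType.
Variable n : nat.
Implicit Types y : 'I_n -> \bar R.

Definition kle y (j i : 'I_n) : bool := (y j < y i) || ((y i == y j) && (j <= i)%N).

Lemma psi_kle y i j : psi i j (y i) (y j) = nat_of_bool (kle y j i).
Proof.
rewrite /psi /kle; case: ltgtP => //= ->; by rewrite eqxx.
Qed.

Lemma rank_card y i : rank y i = #|[set j | kle y j i]|.
Proof.
rewrite /rank (eq_bigr (fun j => if kle y j i then 1%N else 0%N)); last first.
  by move=> j _; rewrite psi_kle; case: kle.
by rewrite -big_mkcond sum1_card cardsE.
Qed.

Lemma kle_refl y i : kle y i i.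
Proof. by rewrite /kle eqxx leqnn orbT. Qed.

Lemma kle_trans y a b c : kle y a b -> kle y b c -> kle y a c.
Proof.
rewrite /kle => /orP[hab|/andP[/eqP hab hab']] /orP[hbc|/andP[/eqP hbc hbc']].
- by rewrite (lt_trans hab hbc).
- by rewrite hbc hab.
- by rewrite -hab hbc.
- by rewrite hbc hab eqxx (leq_trans hab' hbc') orbT.
Qed.

Lemma kle_total y a b : kle y a b || kle y b a.
Proof.
rewrite /kle; case: (ltgtP (y a) (y b)) => //= _; exact: leq_total.
Qed.

Lemma kle_anti y a b : kle y a b -> kle y b a -> a = b.
Proof.
rewrite /kle; case: (ltgtP (y a) (y b)) => //= _ h1 h2.
by apply: val_inj; apply/eqP; rewrite eqn_leq h1 h2.
Qed.

Lemma rank_mono y a b : kle y a b -> (rank y a <= rank y b)%N.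
Proof.
move=> hab; rewrite !rank_card; apply: subset_leq_card; apply/subsetP => j.
rewrite !inE => hj; exact: kle_trans hj hab.
Qed.

Lemma rank_strict y a b : kle y a b -> a != b -> (rank y a < rank y b)%N.
Proof.
move=> hab nab; rewrite !rank_card; apply: proper_card; rewrite properE.
apply/andP; split.
  apply/subsetP => j; rewrite !inE => hj; exact: kle_trans hj hab.
apply/subsetP => /(_ b); rewrite !inE kle_refl => /(_ isT) hba.
by move: nab; rewrite (kle_anti hab hba) eqxx.
Qed.

Lemma rank_inj y : injective (rank y).
Proof.
move=> a b e; apply/eqP; apply/negPn/negP => nab.
case/orP: (kle_total y a b) => h.
  by move: (rank_strict h nab); rewrite e ltnn.
by rewrite eq_sym in nab; move: (rank_strict h nab); rewrite e ltnn.
Qed.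

Lemma rank_ge1 y i : (0 < rank y i)%N.
Proof. by rewrite rank_card card_gt0; apply/set0Pn; exists i; rewrite inE kle_refl. Qed.

Lemma rank_le y i : (rank y i <= n)%N.
Proof. by rewrite rank_card; apply: leq_trans (max_card _) _; rewrite card_ord. Qed.

Lemma rank_lt y i : ((rank y i).-1 < n)%N.
Proof. have := rank_ge1 y i; have := rank_le y i; case: (rank y i) => //. Qed.

Definition rko y i : 'I_n := Ordinal (rank_lt y i).

Lemma rko_inj y : injective (rko y).
Proof.
move=> a b /(congr1 val) /= e; apply: (rank_inj (y:=y)).
by rewrite -(prednK (rank_ge1 y a)) e prednK // rank_ge1.
Qed.

Lemma card_rank_gt y k : #|[set i | (k < rank y i)%N]| = #|[set r : 'I_n | (k < r.+1)%N]|.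
Proof.
have -> : [set i | (k < rank y i)%N] = rko y @^-1: [set r : 'I_n | (k < r.+1)%N].
  by apply/setP => i; rewrite !inE /= prednK // rank_ge1.
by rewrite on_card_preimset //; apply: onW_bij; apply: injF_bij; apply: rko_inj.
Qed.


Lemma kle_swap (y y' : 'I_n -> \bar R) t c :
  y t <= y' t -> y' c <= y c -> ~~ kle y t c -> kle y' c t.
Proof.
rewrite /kle negb_or negb_and -leNgt => ht hc /andP[hct /orP h].
case h1: (y' c < y' t) => //=.
move/negbT: h1; rewrite -leNgt => h2.
have e1 : y' t = y' c.
  apply/le_anti; rewrite h2 /=; apply: (le_trans _ ht); apply: (le_trans hc hct).
have e2 : y c = y t.
  apply/le_anti; rewrite hct /=; apply: (le_trans ht); rewrite e1; exact: hc.
rewrite e1 eqxx /=; case: h => [|h]; first by rewrite e2 eqxx.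
by rewrite -ltnNge in h; apply: ltnW.
Qed.

Lemma count_mono (y y' : 'I_n -> \bar R) (z : 'I_n -> bool)
  (hyy' : forall i, if z i then y i <= y' i else y' i <= y i) k :
  (#|[set i | z i & (k < rank y i)%N]| <= #|[set i | z i & (k < rank y' i)%N]|)%N.
Proof.
set U := [set i | (k < rank y i)%N]; set V := [set i | (k < rank y' i)%N].
set T := [set i | z i].
have -> : [set i | z i & (k < rank y i)%N] = U :&: T.
  by apply/setP => i; rewrite !inE andbC.
have -> : [set i | z i & (k < rank y' i)%N] = V :&: T.
  by apply/setP => i; rewrite !inE andbC.
rewrite leqNgt; apply/negP => hlt.
have hUV : #|U| = #|V| by rewrite !card_rank_gt.
have : ~~ (U :&: T \subset V).
  apply/negP => hs; have : U :&: T \subset V :&: T.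
    by rewrite subsetI hs subsetIr.
  by move/subset_leq_card; rewrite leqNgt hlt.
case/subsetPn => t; rewrite !inE => /andP[htU htT] htV.
have : ~~ (V :\: T \subset U).
  apply/negP => hs; have : V :\: T \subset U :\: T.
    apply/subsetP => x hx; move/subsetP: hs => /(_ x hx).
    by move: hx; rewrite !inE => /andP[-> _] ->.
  move/subset_leq_card => hle.
  have h1 := cardsID T U; have h2 := cardsID T V; lia.
case/subsetPn => c; rewrite !inE => /andP[hcT hcV] hcU.
have htc : ~~ kle y t c.
  by apply/negP => /rank_mono; lia.
move: (hyy' t) (hyy' c); rewrite htT (negbTE hcT) => h1 h2.
move/rank_mono: (kle_swap h1 h2 htc); lia.
Qed.


Lemma sum_bool_card (P : 'I_n -> bool) :
  (\sum_i (P i)%:R = (#|[set i | P i]|)%:R :> R)%R.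
Proof.
rewrite -natr_sum; congr (_ %:R).
rewrite (eq_bigr (fun j => if P j then 1%N else 0%N)); last by move=> j _; case: P.
by rewrite -big_mkcond sum1_card cardsE.
Qed.

Lemma phi_tel (phi : nat -> R) r : (r <= n)%N ->
  phi r = (phi 0%N + \sum_(k < n) (phi k.+1 - phi k) * (k < r)%N%:R)%R.
Proof.
move=> hr.
rewrite (eq_bigr (fun k : 'I_n => if (k < r)%N then (phi k.+1 - phi k)%R else 0%R)); last first.
  by move=> k _; case: ltnP; rewrite ?mulr1 ?mulr0.
rewrite -big_mkcond /= -(big_ord_widen n (fun k => phi k.+1 - phi k)%R hr).
rewrite -(big_mkord xpredT (fun k => phi k.+1 - phi k)%R) telescope_sumr //.
by rewrite addrC subrK.
Qed.

Lemma tR_decomp (phi : nat -> R) (z : 'I_n -> bool) (y : 'I_n -> \bar R) :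
  tR phi z y = (\sum_i (z i)%:R * phi 0%N +
     \sum_(k < n) (phi k.+1 - phi k) * (#|[set i | z i & (k < rank y i)%N]|)%:R)%R.
Proof.
rewrite /tR (eq_bigr (fun i => (z i)%:R * phi 0%N +
   \sum_(k < n) (phi k.+1 - phi k) * ((z i && (k < rank y i)%N))%:R)%R); last first.
  move=> i _; rewrite (phi_tel phi (rank_le y i)) mulrDr mulr_sumr; congr (_ + _)%R.
  by apply: eq_bigr => k _; case: (z i); rewrite ?mul1r ?mul0r ?mulr0.
rewrite big_split /=; congr (_ + _)%R; rewrite exchange_big /=.
apply: eq_bigr => k _; rewrite -mulr_sumr; congr (_ * _)%R.
by rewrite sum_bool_card.
Qed.

Lemma tR_mono (phi : nat -> R)
  (phi_mono : {homo phi : m k / (m <= k)%N >-> (m <= k)%R})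
  (z : 'I_n -> bool) (y y' : 'I_n -> \bar R)
  (hyy' : forall i, if z i then y i <= y' i else y' i <= y i) :
  (tR phi z y <= tR phi z y')%R.
Proof.
rewrite !tR_decomp lerD2l; apply: ler_sum => k _.
apply: ler_wpM2l; first by rewrite subr_ge0 phi_mono.
by rewrite ler_nat count_mono.
Qed.


Lemma seq_min_le (s : seq R) r : r \in s -> (seq_min s <= r)%R.
Proof.
case: s => [//|x s] /=; elim: s x r => [|v s IH] x r.
  by rewrite big_nil inE => /eqP ->.
rewrite big_cons !inE ge_min => /orP[/eqP ->|/orP[/eqP ->|hr]].
- apply/orP; right; apply: IH; exact: mem_head.
- by rewrite lexx.
- apply/orP; right; apply: IH; by rewrite inE hr orbT.
Qed.

Lemma seq_max_ge (s : seq R) r : r \in s -> (r <= seq_max s)%R.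
Proof.
case: s => [//|x s] /=; elim: s x r => [|v s IH] x r.
  by rewrite big_nil inE => /eqP ->.
rewrite big_cons !inE le_max => /orP[/eqP ->|/orP[/eqP ->|hr]].
- apply/orP; right; apply: IH; exact: mem_head.
- by rewrite lexx.
- apply/orP; right; apply: IH; by rewrite inE hr orbT.
Qed.

Lemma seq_min_max (s : seq R) : (seq_min s <= seq_max s)%R.
Proof.
case: s => [|x s]; first by rewrite lexx.
apply: (le_trans (seq_min_le (mem_head x s))); exact: seq_max_ge (mem_head x s).
Qed.

Lemma mem_real1 (y y' : 'I_n -> \bar R) i r : y i = r%:E -> r \in real_coords y y'.
Proof.
move=> e; rewrite /real_coords mem_cat; apply/orP; left; apply/mapP; exists i.
  by rewrite mem_filter mem_enum e andbT.
by rewrite e.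
Qed.

Lemma mem_real2 (y y' : 'I_n -> \bar R) i r : y' i = r%:E -> r \in real_coords y y'.
Proof.
move=> e; rewrite /real_coords mem_cat; apply/orP; right; apply/mapP; exists i.
  by rewrite mem_filter mem_enum e andbT.
by rewrite e.
Qed.

Definition okv (g h : R) (x : \bar R) := forall r, x = r%:E -> (g < r)%R /\ (r < h)%R.

Lemma fill_lt (g h : R) x1 x2 : (g < h)%R -> okv g h x1 -> okv g h x2 ->
  (fill g h x1 < fill g h x2)%R = (x1 < x2).
Proof.
move=> gh; case: x1 => [r1||] h1; case: x2 => [r2||] h2 //=;
  rewrite ?lte_fin ?ltxx //;
  try (have [a1 b1] := h1 _ erefl); try (have [a2 b2] := h2 _ erefl).
- by rewrite b1 ltry.
- by rewrite lt_gtF.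
- by rewrite lt_gtF.
- by rewrite lt_gtF.
- by rewrite a2 ltNyr.
Qed.


Lemma rank_fill (g h : R) (y : 'I_n -> \bar R) : (g < h)%R ->
  (forall i, okv g h (y i)) ->
  forall i, rank y i = rank (fun j => (fill g h (y j))%:E) i.
Proof.
move=> gh ok i; rewrite /rank; apply: eq_bigr => j _; rewrite /psi lte_fin fill_lt //.
by rewrite eqe !eq_le !leNgt !fill_lt.
Qed.

End Aux.

Theorem lemma4 (R : realType) (phi : nat -> R)
  (phi_mono : {homo phi : m k / (m <= k)%N >-> (m <= k)%R})
  (n : nat) (hn : (1 <= n)%N) (z : 'I_n -> bool) (y y' : 'I_n -> \bar R)
  (hyy' : forall i, if z i then y i <= y' i else y' i <= y i)
  (a b : R) (ha : (0 < a)%R) (hb : (0 < b)%R) :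
  let g := gamma y y' a in
  let h := zeta y y' b in
  let yt := fun i => fill g h (y i) in
  let yt' := fun i => fill g h (y' i) in
  [/\ (forall i, if z i then (yt i <= yt' i)%R else (yt' i <= yt i)%R),
      tR phi z y = tR phi z (fun i => (yt i)%:E) /\
      tR phi z y' = tR phi z (fun i => (yt' i)%:E)
    & (tR phi z y <= tR phi z y')%R].
Proof.
move=> g h yt yt'.
have gh : (g < h)%R.
  have := seq_min_max (real_coords y y'); rewrite /g /h /gamma /zeta; lra.
have okr : forall r, r \in real_coords y y' -> (g < r)%R /\ (r < h)%R.
  move=> r m; have := seq_min_le m; have := seq_max_ge m.
  rewrite /g /h /gamma /zeta => h1 h2; split; lra.
have oky : forall i, okv g h (y i) by move=> i r e; apply: okr; exact: mem_real1 e.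
have oky' : forall i, okv g h (y' i) by move=> i r e; apply: okr; exact: mem_real2 e.
split.
- move=> i; have := hyy' i; case: (z i) => hi; by rewrite /yt /yt' leNgt fill_lt // -leNgt.
- by split; apply: eq_bigr => i _; rewrite -rank_fill.
- exact: tR_mono.
Qed.
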